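(* Every Hopfian group $G$ has the $d$-equality property: if $H$ is a group with $G\leqslant^d H$ and $H\leqslant^d G$, then $H\cong G$.
   Context: For groups, $X\leqslant^d Y$ means there exist homomorphisms $f:X\to Y$ and $g:Y\to X$ with $g\circ f=\mathrm{id}_X$. A group is Hopfian if every surjective endomorphism of it is an automorphism. *)

(* Defs.v *)
Record Group : Type := MkGroup {
  carrier :> Type;
  gmul : carrier -> carrier -> carrier;
  gone : carrier;
  ginv : carrier -> carrier;
  gmul_assoc : forall x y z, gmul x (gmul y z) = gmul (gmul x y) z;
  gmul_1l : forall x, gmul gone x = x;
  gmul_1r : forall x, gmul x gone = x;
  gmul_Vl : forall x, gmul (ginv x) x = gone;
  gmul_Vr : forall x, gmul x (ginv x) = gone
}.

Definition is_hom (X Y : Group) (f : X -> Y) : Prop :=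
  forall x y : X, f (gmul X x y) = gmul Y (f x) (f y).

Definition surjective {A B : Type} (f : A -> B) : Prop :=
  forall b, exists a, f a = b.

Definition bijective {A B : Type} (f : A -> B) : Prop :=
  exists g : B -> A, (forall a, g (f a) = a) /\ (forall b, f (g b) = b).

Definition d_le (X Y : Group) : Prop :=
  exists (f : X -> Y) (g : Y -> X),
    is_hom X Y f /\ is_hom Y X g /\ (forall x : X, g (f x) = x).

Definition is_automorphism (X : Group) (f : X -> X) : Prop :=
  is_hom X X f /\ bijective f.

Definition Hopfian (X : Group) : Prop :=
  forall f : X -> X, is_hom X X f -> surjective f -> is_automorphism X f.

Definition isomorphic (X Y : Group) : Prop :=
  exists f : X -> Y, is_hom X Y f /\ bijective f.

(* Main.v *)
Require Import Defs.

Theorem proposition3p2 (G : Group) (hG : Hopfian G) :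
  forall H : Group, d_le G H -> d_le H G -> isomorphic H G.
Proof.
  intros H [f1 [g1 [hf1 [hg1 e1]]]] [f2 [g2 [hf2 [hg2 e2]]]].
  assert (Hh : is_hom G G (fun x => g1 (g2 x))).
  { intros x y. rewrite hg2. apply hg1. }
  assert (Hs : surjective (fun x => g1 (g2 x))).
  { intros b. exists (f2 (f1 b)). rewrite e2. apply e1. }
  destruct (hG _ Hh Hs) as [_ [k [k1 k2]]].
  assert (inj : forall a b, g2 a = g2 b -> a = b).
  { intros a b E. rewrite <- (k1 a), <- (k1 b). rewrite E. reflexivity. }
  exists f2. split; [exact hf2|].
  exists g2. split; [exact e2|].
  intros b. apply inj. apply e2.
Qed.
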